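(* Let $\mathscr{S}=(T,S,\sigma,\mu,\tau_T,\tau_S)$ be a relaxed scenario. Then $G_{<}(\mathscr{S})$ and $G_{>}(\mathscr{S})$ are cographs. If both $S$ and $T$ are binary trees, then $G_{=}(\mathscr{S})$ is also a cograph.
   Context: All trees are planted phylogenetic trees: a tree $T$ has a distinguished vertex $0_T$ of degree $1$ whose unique neighbor $\rho_T$ is the root, and every vertex other than $0_T$ and the leaves $L(T)$ has at least two children; it is binary if every such vertex has exactly two children. For $x,y\in V(T)$ write $y\preceq_T x$ if $x$ lies on the path from $0_T$ to $y$; edges are written $uv$ with $v\prec_T u$. $\mathrm{lca}_T$ denotes the last common ancestor. A time map for $T$ is $\tau_T\colon V(T)\to\mathbb{R}$ with $\tau_T(x)<\tau_T(y)$ whenever $x\prec_T y$. A relaxed scenario $\mathscr{S}=(T,S,\sigma,\mu,\tau_T,\tau_S)$ consists of a gene tree $T$ with time map $\tau_T$, a species tree $S$ with time map $\tau_S$, a map $\sigma\colon L(T)\to M$ with $M\subseteq L(S)$, and a map $\mu\colon V(T)\to V(S)\cup E(S)$ such that (S0) $\mu(x)=0_S$ iff $x=0_T$; (S1) $\mu(x)\in L(S)$ iff $x\in L(T)$, in which case $\mu(x)=\sigma(x)$; (S2) if $\mu(x)\in V(S)$ then $\tau_S(\mu(x))=\tau_T(x)$; (S3) if $\mu(x)=uv\in E(S)$ then $\tau_S(v)<\tau_T(x)<\tau_S(u)$. The graphs $G_{=}(\mathscr{S})$, $G_{<}(\mathscr{S})$, $G_{>}(\mathscr{S})$ have vertex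 set $L(T)$, and for distinct $x,y$ the pair $xy$ is an edge of $G_{=}(\mathscr{S})$, $G_{<}(\mathscr{S})$, resp. $G_{>}(\mathscr{S})$ iff $\tau_T(\mathrm{lca}_T(x,y))$ is $=$, $<$, resp. $>$ than $\tau_S(\mathrm{lca}_S(\sigma(x),\sigma(y)))$. A cograph is a graph with no induced path on four vertices. *)

(* Defs.v *)
From HB Require Import structures.
From mathcomp Require Import all_boot all_order all_algebra.
From mathcomp Require Import reals.
Set Implicit Arguments. Unset Strict Implicit. Unset Printing Implicit Defensive.
Import Order.TTheory GRing.Theory Num.Theory.
Local Open Scope ring_scope.

(* A planted phylogenetic tree on a finite vertex type V is given by its
   planted vertex [r0] (= 0_T) and the parent map [par]: [par v] is the
   unique neighbour of v on the path towards 0_T; [par r0 = r0] by convention. *)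
Definition children {V : finType} (r0 : V) (par : V -> V) (v : V) : {set V} :=
  [set w | (w != r0) && (par w == v)].

Record ptree (V : finType) := PTree {
  zero : V;
  par : V -> V;
  par_zero : par zero = zero;
  reach_zero : forall v, exists k, iter k par v = zero;
  zero_deg1 : #|children zero par zero| = 1%N;
  inner_ge2 : forall v, v != zero -> children zero par v != set0 ->
                (2 <= #|children zero par v|)%N
}.

Section Trees.
Context {V : finType} (T : ptree V).

Definition childrenT (v : V) := children (zero T) (par T) v.

Definition is_leaf (v : V) : bool := (v != zero T) && (childrenT v == set0).

Definition binary : Prop :=
  forall v, v != zero T -> ~~ is_leaf v -> #|childrenT v| = 2%N.

Definition preceq (y x : V) : Prop := exists k, iter k (par T) y = x.
Definition prec (y x : V) : Prop := preceq y x /\ y <> x.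

Definition is_lca (x y z : V) : Prop :=
  preceq x z /\ preceq y z /\ (forall w, preceq x w -> preceq y w -> preceq z w).

End Trees.

Definition time_map {R : realType} {V : finType} (T : ptree V) (tau : V -> R) : Prop :=
  forall x y, prec T x y -> tau x < tau y.

(* Images of mu: a vertex of S ([inl v]) or an edge of S, the edge (par v, v)
   with v <> 0_S being represented by its lower endpoint v ([inr v]). *)
Record relaxed_scenario {R : realType} {VT VS : finType}
  (T : ptree VT) (S : ptree VS) (sigma : VT -> VS) (mu : VT -> VS + VS)
  (tauT : VT -> R) (tauS : VS -> R) : Prop := {
  rs_tauT : time_map T tauT;
  rs_tauS : time_map S tauS;
  rs_sigma : forall x, is_leaf T x -> is_leaf S (sigma x);
  rs_edge : forall x v, mu x = inr v -> v != zero S;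
  rs_S0 : forall x, mu x = inl (zero S) <-> x = zero T;
  rs_S1a : forall x, (exists l, mu x = inl l /\ is_leaf S l) <-> is_leaf T x;
  rs_S1b : forall x, is_leaf T x -> mu x = inl (sigma x);
  rs_S2 : forall x v, mu x = inl v -> tauS v = tauT x;
  rs_S3 : forall x v, mu x = inr v -> tauS v < tauT x /\ tauT x < tauS (par S v)
}.

Definition G_rel {R : realType} {VT VS : finType} (cmp : R -> R -> Prop)
  (T : ptree VT) (S : ptree VS) (sigma : VT -> VS)
  (tauT : VT -> R) (tauS : VS -> R) (x y : VT) : Prop :=
  x <> y /\ exists a b, is_lca T x y a /\ is_lca S (sigma x) (sigma y) b /\
                        cmp (tauT a) (tauS b).

Definition G_eq {R : realType} {VT VS : finType} (T : ptree VT) (S : ptree VS)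
  (sigma : VT -> VS) (tauT : VT -> R) (tauS : VS -> R) :=
  G_rel (fun a b => a = b) T S sigma tauT tauS.
Definition G_lt {R : realType} {VT VS : finType} (T : ptree VT) (S : ptree VS)
  (sigma : VT -> VS) (tauT : VT -> R) (tauS : VS -> R) :=
  G_rel (fun a b => a < b) T S sigma tauT tauS.
Definition G_gt {R : realType} {VT VS : finType} (T : ptree VT) (S : ptree VS)
  (sigma : VT -> VS) (tauT : VT -> R) (tauS : VS -> R) :=
  G_rel (fun a b => a > b) T S sigma tauT tauS.

Definition cograph {V : Type} (P : V -> Prop) (E : V -> V -> Prop) : Prop :=
  ~ exists a b c d, P a /\ P b /\ P c /\ P d /\
      a <> b /\ a <> c /\ a <> d /\ b <> c /\ b <> d /\ c <> d /\
      E a b /\ E b c /\ E c d /\ ~ E a c /\ ~ E b d /\ ~ E a d.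

(* Main.v *)
Require Import Defs.
From mathcomp Require Import all_boot all_order all_algebra reals.
From mathcomp Require Import boolp lra.
From Stdlib Require Import ClassicalEpsilon.
Import Order.TTheory GRing.Theory Num.Theory.
Set Implicit Arguments. Unset Strict Implicit.
Local Open Scope ring_scope.

Section TreeFacts.
Context {V : finType} (T : ptree V).

Lemma pq_refl x : preceq T x x.
Proof. by exists 0%N. Qed.

Lemma pq_trans x y z : preceq T x y -> preceq T y z -> preceq T x z.
Proof. by move=> [k hk] [m hm]; exists (m + k)%N; rewrite iterD hk. Qed.

Lemma pq_par x : preceq T x (par T x).
Proof. by exists 1%N. Qed.

Lemma iter_zero k : iter k (par T) (zero T) = zero T.
Proof. by elim: k => //= k ->; rewrite par_zero. Qed.

Lemma pq_chain y a b : preceq T y a -> preceq T y b ->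
  preceq T a b \/ preceq T b a.
Proof.
move=> [k hk] [m hm]; case: (leqP k m) => h.
  left; exists (m - k)%N; by rewrite -hk -iterD subnK.
right; exists (k - m)%N; rewrite -hm -iterD subnK //; exact: ltnW.
Qed.

Lemma cycle_zero a k : iter k.+1 (par T) a = a -> a = zero T.
Proof.
move=> hc; have hj : forall j, iter (j * k.+1) (par T) a = a.
  by elim=> // j IH; rewrite mulSn iterD IH hc.
have [n hn] := reach_zero T a.
have hle : (n <= n * k.+1)%N by rewrite leq_pmulr.
by rewrite -(hj n) -(subnK hle) iterD hn iter_zero.
Qed.

Lemma pq_antisym a b : preceq T a b -> preceq T b a -> a = b.
Proof.
move=> [k hk] [m hm]; case E: (m + k)%N => [|n].
  by move: E => /eqP; rewrite addn_eq0 => /andP[_ /eqP k0]; rewrite -hk k0.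
have ha : a = zero T by apply: (@cycle_zero a n); rewrite -E iterD hk hm.
by rewrite -hk ha iter_zero.
Qed.

Lemma par_fix v : par T v = v -> v = zero T.
Proof. by move=> h; apply: (@cycle_zero v 0). Qed.

Lemma lca_ex x y : exists z, is_lca T x y z.
Proof.
have exP : exists k, `[< preceq T y (iter k (par T) x) >].
  have [n hn] := reach_zero T x; exists n; apply/asboolP; rewrite hn.
  exact: reach_zero.
case: (ex_minnP exP) => k /asboolP hk hmin.
exists (iter k (par T) x); split; first by exists k.
split=> // w [j hj] hyw.
have hkj : (k <= j)%N by apply: hmin; apply/asboolP; rewrite hj.
by exists (j - k)%N; rewrite -iterD subnK.
Qed.

Lemma lca_uniq x y z z' : is_lca T x y z -> is_lca T x y z' -> z = z'.
Proof.
move=> [h1 [h2 h3]] [h1' [h2' h3']]; apply: pq_antisym; auto.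
Qed.

Lemma lca_sym x y z : is_lca T x y z -> is_lca T y x z.
Proof. by move=> [h1 [h2 h3]]; split=> //; split=> // w a b; apply: h3. Qed.

Definition lcaf (x y : V) : V := epsilon (inhabits x) (is_lca T x y).

Lemma lcafP x y : is_lca T x y (lcaf x y).
Proof. exact: (epsilon_spec (inhabits x) (is_lca T x y) (lca_ex x y)). Qed.

Lemma lcaf_eq x y z : is_lca T x y z -> lcaf x y = z.
Proof. by move=> h; apply: (lca_uniq (lcafP x y) h). Qed.

Lemma lcaf_sym x y : lcaf x y = lcaf y x.
Proof. by apply: lcaf_eq; apply: lca_sym; apply: lcafP. Qed.

Lemma lcaf_xx x : lcaf x x = x.
Proof. by apply: lcaf_eq; split; [exact: pq_refl|split; [exact: pq_refl|]]. Qed.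

Lemma leaf_below v u : is_leaf T v -> preceq T u v -> u = v.
Proof.
move=> /andP[vz /eqP hc] [[|k] hk] //.
rewrite iterS in hk; set c := iter k (par T) u in hk.
case: (eqVneq c (zero T)) => hcz.
  by move: vz; rewrite -hk hcz par_zero eqxx.
have : c \in childrenT T v by rewrite /childrenT /children inE hcz hk eqxx.
by rewrite hc inE.
Qed.

Lemma child_of u w : preceq T u w -> u <> w ->
  exists c, c \in childrenT T w /\ preceq T u c /\ c <> w.
Proof.
move=> [k0 hk0] uw.
have exP : exists k, iter k (par T) u == w by exists k0; rewrite hk0.
case: (ex_minnP exP) => [[|k]] /eqP hk hmin; first by [].
rewrite iterS in hk; set c := iter k (par T) u in hk.
have cw : c <> w.
  move=> e; have := hmin k; rewrite -/c e eqxx => /(_ isT); by rewrite ltnn.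
exists c; split; last by split=> //; exists k.
rewrite /childrenT /children inE hk eqxx andbT; apply/eqP=> cz.
by apply: cw; rewrite -hk cz par_zero.
Qed.

Section Time.
Context {R : realType} (tau : V -> R) (Ht : time_map T tau).

Lemma tau_lt x y : preceq T x y -> x <> y -> tau x < tau y.
Proof. by move=> h1 h2; apply: Ht. Qed.

Lemma tau_le x y : preceq T x y -> tau x <= tau y.
Proof.
move=> h; case: (eqVneq x y) => [->//|ne]; apply: ltW; apply: tau_lt => //.
exact/eqP.
Qed.

Lemma ult x y z : tau (lcaf x z) <= tau (lcaf x y) \/ tau (lcaf x z) <= tau (lcaf y z).
Proof.
have [px [py _]] := lcafP x y; have [qy [qz _]] := lcafP y z.
have [_ [_ r3]] := lcafP x z.
case: (pq_chain py qy) => h.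
  right; apply: tau_le; apply: r3 => //; exact: pq_trans px h.
left; apply: tau_le; apply: r3 => //; exact: pq_trans qz h.
Qed.

Lemma strict x y z : binary T -> is_leaf T x -> is_leaf T y -> is_leaf T z ->
  x <> y -> y <> z -> tau (lcaf x y) = tau (lcaf y z) ->
  tau (lcaf x z) < tau (lcaf x y).
Proof.
move=> Hbin lx ly lz xy yz heq.
have [px [py pm]] := lcafP x y; have [qy [qz qm]] := lcafP y z.
have [rx [rz rm]] := lcafP x z.
have epq : lcaf x y = lcaf y z.
  case: (pq_chain py qy) => h; case: (eqVneq (lcaf x y) (lcaf y z)) => // /eqP ne.
    by have := tau_lt h ne; rewrite heq ltxx.
  by have := tau_lt h (nesym ne); rewrite heq ltxx.
set w := lcaf x y in px py pm epq heq *.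
rewrite -epq in qy qz qm.
have xw : x <> w by move=> e; apply: xy; symmetry; apply: leaf_below lx _; rewrite e.
have yw : y <> w by move=> e; apply: xy; apply: leaf_below ly _; rewrite e.
have zw : z <> w by move=> e; apply: yz; apply: leaf_below lz _; rewrite e.
have [cx [cxin [xcx cxw]]] := child_of px xw.
have [cy [cyin [ycy cyw]]] := child_of py yw.
have [cz [czin [zcz czw]]] := child_of qz zw.
have cpar : forall c, c \in childrenT T w -> preceq T c w.
  by move=> c; rewrite /childrenT /children inE => /andP[_ /eqP <-]; exact: pq_par.
have cxy : cx <> cy.
  move=> e; apply: cxw; apply: pq_antisym; first exact: cpar.
  by apply: pm => //; rewrite e.
have cyz : cy <> cz.
  move=> e; apply: cyw; apply: pq_antisym; first exact: cpar.
  by apply: qm => //; rewrite e.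
have wz : w != zero T.
  apply/eqP=> e; have := zero_deg1 T; move/eqP/cards1P => [u hu].
  move: cxin cyin; rewrite /childrenT e hu !inE => /eqP e1 /eqP e2; apply: cxy; by rewrite e1 e2.
have wl : ~~ is_leaf T w.
  rewrite /is_leaf wz /=; apply/eqP=> e; by move: cxin; rewrite e inE.
have := Hbin w wz wl; move/eqP/cards2P => [u [v [_ huv]]].
have cxz : cx = cz.
  move: cxin cyin czin cxy cyz; rewrite huv !inE.
  case/orP=> /eqP e1; case/orP=> /eqP e2; case/orP=> /eqP e3; subst cx cy cz; congruence.
have rcx : preceq T (lcaf x z) cx by apply: rm => //; rewrite cxz.
apply: (le_lt_trans (tau_le rcx)); apply: tau_lt => //; exact: cpar.
Qed.

End Time.
End TreeFacts.

Section Abstract.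
Context {R : realType} {X : Type} (f g : X -> X -> R).
Hypothesis Uf : forall x y z, f x z <= f x y \/ f x z <= f y z.
Hypothesis Ug : forall x y z, g x z <= g x y \/ g x z <= g y z.
Hypothesis Sf : forall x y, f x y = f y x.
Hypothesis Sg : forall x y, g x y = g y x.

Lemma max2 (a b c : R) : a < b -> (c <= a \/ c <= b) -> (b <= a \/ b <= c) -> c = b.
Proof.
move=> h [h1|h1] [h2|h2]; apply/eqP; rewrite eq_le; apply/andP; split; lra.
Qed.

Lemma tri_lt (tab tbc tac sab sbc sac : R) :
  (tac <= tab \/ tac <= tbc) -> tab < sab -> tbc < sbc -> sac <= tac ->
  (sab <= sac \/ sab <= sbc) -> (sbc <= sab \/ sbc <= sac) ->
  sab = sbc /\ sac < sab.
Proof.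
move=> [h1|h1] h2 h3 h4 [h5|h5] [h6|h6]; split; try lra;
  apply/eqP; rewrite eq_le; apply/andP; split; lra.
Qed.

Lemma final_lt (tab tbc tcd tbd tad sab sbc scd sbd sad : R) :
  tab < sab -> tbc < sbc -> tcd < scd -> sab = sbc -> sbc = scd -> sbd < sbc ->
  sad <= tad -> (tad <= tab \/ tad <= tbd) -> (tbd <= tbc \/ tbd <= tcd) ->
  (sab <= sad \/ sab <= sbd) -> False.
Proof. move=> ? ? ? ? ? ? ? [?|?] [?|?] [?|?]; lra. Qed.

Lemma absLT a b c d : f a b < g a b -> f b c < g b c -> f c d < g c d ->
  ~ f a c < g a c -> ~ f b d < g b d -> ~ f a d < g a d -> False.
Proof.
move=> e1 e2 e3 /negP n1 /negP n2 /negP n3.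
rewrite -leNgt in n1; rewrite -leNgt in n2; rewrite -leNgt in n3.
have [h1 h2] : g a b = g b c /\ g a c < g a b.
  apply: (tri_lt (Uf a b c) e1 e2 n1).
    by have := Ug a c b; rewrite (Sg c b).
  by have := Ug b a c; rewrite (Sg b a).
have [h3 h4] : g b c = g c d /\ g b d < g b c.
  apply: (tri_lt (Uf b c d) e2 e3 n2).
    by have := Ug b d c; rewrite (Sg d c).
  by have := Ug c b d; rewrite (Sg c b).
apply: (final_lt e1 e2 e3 h1 h3 h4 n3 (Uf a b d) (Uf b c d)).
by have := Ug a d b; rewrite (Sg d b).
Qed.

Lemma or_sw (P Q : Prop) : P \/ Q -> Q \/ P.
Proof. by case; [right|left]. Qed.

Lemma absTri x y z : (f x y = f y z -> f x z < f x y) ->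
  (g x y = g y z -> g x z < g x y) ->
  f x y = g x y -> f y z = g y z -> f x z <> g x z ->
  f x y = f y z /\ g x z < g x y.
Proof.
move=> sf sg e1 e2 ne.
case: (ltgtP (f x y) (f y z)) => h.
- exfalso; apply: ne.
  have hf : f x z = f y z.
    apply: max2 h (Uf x y z) _; by have := Uf y x z; rewrite (Sf y x).
  have hg : g x z = g y z.
    apply: max2 (_ : g x y < g y z) (Ug x y z) _; first by rewrite -e1 -e2.
    by have := Ug y x z; rewrite (Sg y x).
  by rewrite hf hg e2.
- exfalso; apply: ne.
  have hf : f x z = f x y.
    apply: max2 h (or_sw (Uf x y z)) _; by have := Uf x z y; rewrite (Sf z y); apply: or_sw.
  have hg : g x z = g x y.
    apply: max2 (_ : g y z < g x y) (or_sw (Ug x y z)) _; first by rewrite -e1 -e2.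
    by have := Ug x z y; rewrite (Sg z y); apply: or_sw.
  by rewrite hf hg e1.
- split=> //; apply: sg; by rewrite -e1 -e2.
Qed.

Lemma absEQ a b c d :
  (f a b = f b c -> f a c < f a b) -> (g a b = g b c -> g a c < g a b) ->
  (f b c = f c d -> f b d < f b c) -> (g b c = g c d -> g b d < g b c) ->
  f a b = g a b -> f b c = g b c -> f c d = g c d ->
  f a c <> g a c -> f b d <> g b d -> f a d <> g a d -> False.
Proof.
move=> s1 s2 s3 s4 e1 e2 e3 n1 n2 n3.
have [h1 h2] := absTri s1 s2 e1 e2 n1.
have [h3 h4] := absTri s3 s4 e2 e3 n2.
have h5 := s3 h3.
have hf : f a d = f a b.
  apply: max2 (_ : f b d < f a b) (or_sw (Uf a b d)) _; first by rewrite h1.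
  by have := Uf a d b; rewrite (Sf d b); apply: or_sw.
have hg : g a d = g a b.
  apply: max2 (_ : g b d < g a b) (or_sw (Ug a b d)) _.
    by rewrite -e1 h1 e2.
  by have := Ug a d b; rewrite (Sg d b); apply: or_sw.
by apply: n3; rewrite hf hg e1.
Qed.

End Abstract.

Lemma G_relE {R : realType} {VT VS : finType} (cmp : R -> R -> Prop)
  (T : ptree VT) (S : ptree VS) (sigma : VT -> VS)
  (tauT : VT -> R) (tauS : VS -> R) x y :
  G_rel cmp T S sigma tauT tauS x y <->
  x <> y /\ cmp (tauT (lcaf T x y)) (tauS (lcaf S (sigma x) (sigma y))).
Proof.
split.
  move=> [xy [a [b [ha [hb hc]]]]]; split=> //.
  by rewrite (lcaf_eq ha) (lcaf_eq hb).
move=> [xy hc]; split=> //; exists (lcaf T x y), (lcaf S (sigma x) (sigma y)).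
by split; [exact: lcafP|split; [exact: lcafP|]].
Qed.

Theorem theorem1 (R : realType) (VT VS : finType) (T : ptree VT) (S : ptree VS)
  (sigma : VT -> VS) (mu : VT -> VS + VS) (tauT : VT -> R) (tauS : VS -> R) :
  relaxed_scenario T S sigma mu tauT tauS ->
  cograph (fun x => is_leaf T x) (G_lt T S sigma tauT tauS) /\
  cograph (fun x => is_leaf T x) (G_gt T S sigma tauT tauS) /\
  (binary S -> binary T ->
     cograph (fun x => is_leaf T x) (G_eq T S sigma tauT tauS)).
Proof.
move=> H.
pose f := fun x y => tauT (lcaf T x y).
pose g := fun x y => tauS (lcaf S (sigma x) (sigma y)).
have Uf : forall x y z, f x z <= f x y \/ f x z <= f y z.
  by move=> x y z; exact: (ult (rs_tauT H) x y z).
have Ug : forall x y z, g x z <= g x y \/ g x z <= g y z.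
  by move=> x y z; exact: (ult (rs_tauS H) (sigma x) (sigma y) (sigma z)).
have Sf : forall x y, f x y = f y x by move=> x y; rewrite /f lcaf_sym.
have Sg : forall x y, g x y = g y x by move=> x y; rewrite /g lcaf_sym.
split; last split.
- move=> [a [b [c [d [la [lb [lc [ld [ab [ac [ad [bc [bd [cd
    [E1 [E2 [E3 [N1 [N2 N3]]]]]]]]]]]]]]]]]]].
  rewrite /G_lt !G_relE in E1 E2 E3 N1 N2 N3.
  apply: (absLT Uf Ug Sg (a:=a) (b:=b) (c:=c) (d:=d)).
  + exact: E1.2.
  + exact: E2.2.
  + exact: E3.2.
  + by move=> h; apply: N1.
  + by move=> h; apply: N2.
  + by move=> h; apply: N3.
- move=> [a [b [c [d [la [lb [lc [ld [ab [ac [ad [bc [bd [cd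
    [E1 [E2 [E3 [N1 [N2 N3]]]]]]]]]]]]]]]]]]].
  rewrite /G_gt !G_relE in E1 E2 E3 N1 N2 N3.
  apply: (absLT Ug Uf Sf (a:=a) (b:=b) (c:=c) (d:=d)).
  + exact: E1.2.
  + exact: E2.2.
  + exact: E3.2.
  + by move=> h; apply: N1.
  + by move=> h; apply: N2.
  + by move=> h; apply: N3.
- move=> Hbs Hbt [a [b [c [d [la [lb [lc [ld [ab [ac [ad [bc [bd [cd
    [E1 [E2 [E3 [N1 [N2 N3]]]]]]]]]]]]]]]]]]].
  rewrite /G_eq !G_relE in E1 E2 E3 N1 N2 N3.
  have sne : forall x y, is_leaf T x -> is_leaf T y -> x <> y ->
      f x y = g x y -> sigma x <> sigma y.
    move=> x y lx ly xy e hs.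
    have [px [py _]] := lcafP T x y.
    have xl : x <> lcaf T x y.
      by move=> h; apply: xy; symmetry; apply: leaf_below lx _; rewrite h.
    have := tau_lt (rs_tauT H) px xl.
    rewrite -/(f x y) e /g -hs lcaf_xx (rs_S2 H (rs_S1b H lx)).
    by rewrite ltxx.
  have sab := sne a b la lb ab E1.2.
  have sbc := sne b c lb lc bc E2.2.
  have scd := sne c d lc ld cd E3.2.
  have lsa := rs_sigma H la; have lsb := rs_sigma H lb.
  have lsc := rs_sigma H lc; have lsd := rs_sigma H ld.
  apply: (absEQ Uf Ug Sf Sg (a:=a) (b:=b) (c:=c) (d:=d)).
  + exact: (strict (rs_tauT H) Hbt la lb lc ab bc).
  + exact: (strict (rs_tauS H) Hbs lsa lsb lsc sab sbc).
  + exact: (strict (rs_tauT H) Hbt lb lc ld bc cd).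
  + exact: (strict (rs_tauS H) Hbs lsb lsc lsd sbc scd).
  + exact: E1.2.
  + exact: E2.2.
  + exact: E3.2.
  + by move=> h; apply: N1.
  + by move=> h; apply: N2.
  + by move=> h; apply: N3.
Qed.
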